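(* Let $n\ge 2$, $d\ge1$, $r\ge1$ be integers with $n\ge d$ and $dr\equiv0\pmod n$. Then $Q_n^-(d,r)\cong Q_n(d,r)$.
   Context: $\mathbb{Z}_2^n=\{0,1\}^n$ with coordinatewise addition mod 2; $e_i$ is the $i$-th standard basis vector, subscripts read modulo $n$. The recursive cube of rings $Q_n(d,r)$ (for $n\ge d$, $dr\equiv0\pmod n$) is the simple graph with vertex set $\mathbb{Z}_2^n\times\mathbb{Z}_r$ in which $(a,x)$ is adjacent to $(a+e_{i+dx},x)$ for $1\le i\le d$ and to $(a,x\pm1)$. The general recursive cube of rings $Q_n^-(d,r)$ is the simple graph with vertex set $\mathbb{Z}_2^n\times\{0,1,\dots,r-1\}$ in which $(a,x)$ and $(b,y)$ are adjacent iff either $a=b$ and $x\equiv y\pm1\pmod r$, or $x=y$ and $b=a+e_{i-dx}$ for some $1\le i\le d$. *)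

(* Defs.v *)
From mathcomp Require Import all_boot.
Set Implicit Arguments. Unset Strict Implicit. Unset Printing Implicit Defensive.

(* Vertices: Z_2^n x Z_r, with Z_2^n = {ffun 'I_n -> bool} and Z_r = 'I_r
   (the representatives {0,...,r-1}). Coordinates are 0-indexed: the paper's
   e_j (j an integer read mod n, with indices 1..n) is the 0-indexed
   coordinate (j - 1) mod n. *)
Definition vtx (n r : nat) := ({ffun 'I_n -> bool} * 'I_r)%type.

Definition flip (n : nat) (a : {ffun 'I_n -> bool}) (k : nat) : {ffun 'I_n -> bool} :=
  [ffun j : 'I_n => addb (a j) (val j == k %% n)].

Definition ring_adj (r : nat) (x y : 'I_r) : bool :=
  (x != y) && ((val y == (val x).+1 %% r) || (val x == (val y).+1 %% r)).

(* recursive cube of rings Q_n(d,r): (a,x) ~ (a + e_{i + d x}, x), 1 <= i <= d *)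
Definition Qadj (n d r : nat) : rel (vtx n r) := fun u v =>
  ((u.1 == v.1) && ring_adj u.2 v.2) ||
  ((u.2 == v.2) &&
   [exists i : 'I_d, v.1 == flip u.1 ((i.+1).-1 + d * val u.2)]).

(* general recursive cube of rings Q_n^-(d,r): (a,x) ~ (a + e_{i - d x}, x);
   the index (i - d x) - 1 mod n is computed in nat as
   (i - 1 + (n - (d x mod n))) mod n. *)
Definition Qminus_adj (n d r : nat) : rel (vtx n r) := fun u v =>
  ((u.1 == v.1) && ring_adj u.2 v.2) ||
  ((u.2 == v.2) &&
   [exists i : 'I_d, v.1 == flip u.1 ((i.+1).-1 + (n - (d * val u.2) %% n))]).

Definition isomorphic (T : finType) (e1 e2 : rel T) : Prop :=
  exists f : T -> T, bijective f /\ forall u v, e1 u v = e2 (f u) (f v).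
Arguments Qadj : clear implicits.
Arguments Qminus_adj : clear implicits.

(* Main.v *)
Require Import Defs.
From mathcomp Require Import all_boot.
From mathcomp Require Import zify.
Set Implicit Arguments. Unset Strict Implicit. Unset Printing Implicit Defensive.

Lemma sig_lt n d (j : 'I_n) : (d.-1 + (n - j)) %% n < n.
Proof. apply: ltn_pmod. exact: (leq_ltn_trans (leq0n j) (ltn_ord j)). Qed.

Definition sig n d (j : 'I_n) : 'I_n := Ordinal (sig_lt d j).

Definition fa n d (a : {ffun 'I_n -> bool}) : {ffun 'I_n -> bool} :=
  [ffun j => a (sig d j)].

Lemma cancel_mod n a b c : a + c = b + c %[mod n] -> a = b %[mod n].
Proof. by move/eqP; rewrite eqn_modDr => /eqP. Qed.

Lemma flip_mod n a k k' : k = k' %[mod n] -> flip a k = flip (n:=n) a k'.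
Proof. by move=> H; apply/ffunP => j; rewrite !ffunE H. Qed.

Lemma key0 n d j M : j < n -> M <= n ->
  ((d.-1 + (n - j)) %% n == M %% n) = (j == (d.-1 + (n - M)) %% n).
Proof.
move=> jn Mn.
have E1 : j + (d.-1 + (n - j)) = d.-1 + n by lia.
have E2 : d.-1 + (n - M) + M = d.-1 + n by lia.
apply/eqP/eqP => H.
- rewrite -[j in LHS](modn_small jn); apply: (@cancel_mod _ _ _ M).
  by rewrite E2 -(modnDmr j M) -H modnDmr E1.
- apply: (@cancel_mod _ _ _ j).
  by rewrite addnC E1 H modnDmr [M + _]addnC E2.
Qed.

Lemma key n d (j : 'I_n) m :
  (val (sig d j) == m %% n) = (val j == (d.-1 + (n - m %% n)) %% n).
Proof.
have jn := ltn_ord j.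
have n0 : 0 < n by exact: (leq_ltn_trans (leq0n j) jn).
have mn : m %% n <= n by apply: ltnW; apply: ltn_pmod.
by rewrite /= -key0 // modn_mod.
Qed.

Lemma fa_flip n d (a : {ffun 'I_n -> bool}) m :
  fa d (flip a m) = flip (fa d a) (d.-1 + (n - m %% n)).
Proof. by apply/ffunP => j; rewrite !ffunE key. Qed.

Lemma sigK n d (j : 'I_n) : sig d (sig d j) = j.
Proof.
apply/val_inj/eqP; have := key d (sig d j) j.
by rewrite (modn_small (ltn_ord j)) => ->.
Qed.

Lemma fa_inv n d (a : {ffun 'I_n -> bool}) : fa d (fa d a) = a.
Proof. by apply/ffunP => j; rewrite !ffunE sigK. Qed.

Lemma cong n d k D : 0 < n -> k < d ->
  d.-1 + (n - (k + (n - D %% n)) %% n) = (d - k.+1) + D %[mod n].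
Proof.
move=> n0 kd.
set K := k + (n - D %% n).
have Rn : K %% n <= n by apply: ltnW; apply: ltn_pmod.
have sn : D %% n <= n by apply: ltnW; apply: ltn_pmod.
have DE := divn_eq D n.
have E : (d - k.+1) + D + K = d.-1 + n + D %/ n * n by rewrite /K; lia.
have E2 : d.-1 + (n - K %% n) + K %% n = d.-1 + n by lia.
apply: (@cancel_mod _ _ _ K).
by rewrite E [_ + D %/ n * n]addnC modnMDl -(modnDmr _ K n) E2.
Qed.

Theorem mainTheorem4 (n d r : nat) :
  2 <= n -> 1 <= d -> 1 <= r -> d <= n -> n %| d * r ->
  isomorphic (Qminus_adj n d r) (Qadj n d r).
Proof.
move=> n2 d1 _ _ _.
have n0 : 0 < n by apply: leq_trans n2.
have fainj : injective (@fa n d) by apply: (can_inj (@fa_inv n d)).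
exists (fun u : vtx n r => (fa d u.1, u.2)); split.
  by exists (fun u : vtx n r => (fa d u.1, u.2)); case=> a x; rewrite /= fa_inv.
move=> [a x] [b y] /=; rewrite /Qminus_adj /Qadj /= (inj_eq fainj).
congr (_ || (_ && _)).
apply/existsP/existsP => -[i Hi]; exists (rev_ord i); move: Hi => /=.
- move/eqP => ->; rewrite fa_flip; apply/eqP/flip_mod.
  exact: cong.
- move=> Hi; rewrite -(inj_eq fainj) fa_flip (eqP Hi); apply/eqP/flip_mod.
  have io := ltn_ord i.
  have kd : d - i.+1 < d by lia.
  rewrite (@cong n d (d - i.+1) (d * x) n0 kd).
  have -> : d - (d - i.+1).+1 = i by lia.
  by [].
Qed.
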